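(* Let $C, A \subseteq \omega$ with $A \not\leq_T C$. Then every condition has an acceptable part. Moreover, for every condition $c$ and every $m \in \omega$ there is a condition $d$ extending $c$ such that $d$ forces $Q_m$ on each of its acceptable parts.
   Context: Fix sets $C, A \subseteq \omega$. For $\sigma \in 2^{<\omega}$ and $X \in 2^\omega$ (or a string of length at least $|\sigma|$), $X/\sigma$ denotes the result of replacing the first $|\sigma|$ bits of $X$ by $\sigma$; strings and elements of $2^\omega$ are identified with (finite or infinite) subsets of $\omega$. A Mathias condition is a pair $(\sigma, X)$ with $\sigma \in 2^{<\omega}$, $X \in 2^\omega$; $(\tau,Y)$ extends $(\sigma,X)$ if $\sigma \preceq \tau$ and $Y/\tau \subseteq X/\sigma$; a set $G$ satisfies $(\sigma,X)$ if $\sigma \prec G$ and $G \subseteq X/\sigma$. A set $X = X_0 \oplus \cdots \oplus X_{k-1}$ codes an ordered $k$-partition of $\omega$ if $\bigcup_{i<k} X_i = \omega$ (the parts need not be disjoint). A condition is a tuple $c = (k, \sigma_0, \ldots, \sigma_{k-1}, P)$ with $k > 0$, each $\sigma_i \in 2^{<\omega}$, and $P$ a non-empty $\Pi^{0,C}_1$ class each of whose members codes an ordered $k$-partition of $\omega$. A condition $d = (m, \tau_0,\ldots,\tau_{m-1}, Q)$ extends $c$ if there is a function $f : m \to k$ such that for every $Y_0 \oplus \cdots \oplus Y_{m-1} \in Q$ there is $X_0 \oplus \cdots \oplus X_{k-1} \in P$ such that for each $i<m$ the Mathias condition $(\tau_i, Y_i)$ extends $(\sigma_{f(i)}, X_{f(i)})$.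 A set $G$ satisfies $c$ on part $i$ if there is $X_0\oplus\cdots\oplus X_{k-1} \in P$ with $G$ satisfying $(\sigma_i, X_i)$. Part $i$ of $c$ is acceptable if there is $X_0 \oplus \cdots \oplus X_{k-1} \in P$ such that $X_i \cap A$ and $X_i \cap \overline{A}$ are both infinite. The condition $c$ forces $Q_m$ on part $i$ if $|\sigma_i \cap A| \geq m$ and $|\sigma_i \cap \overline{A}| \geq m$ (with $\sigma_i$ viewed as a finite set). *)

(* Defs.v *)
From mathcomp Require Import all_boot.
Set Implicit Arguments. Unset Strict Implicit. Unset Printing Implicit Defensive.

Inductive code : Type :=
| CZero : code
| CSucc : code
| CProj : nat -> code
| COracle : code
| CComp : code -> list code -> code
| CPrec : code -> code -> code
| CMu : code -> code.

Inductive eval (O : nat -> bool) : code -> seq nat -> nat -> Prop :=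
| ev_zero xs : eval O CZero xs 0
| ev_succ xs : eval O CSucc xs (head 0 xs).+1
| ev_proj i xs : eval O (CProj i) xs (nth 0 xs i)
| ev_oracle xs : eval O COracle xs (if O (head 0 xs) then 1 else 0)
| ev_comp f gs xs ys y :
    evals O gs xs ys -> eval O f ys y -> eval O (CComp f gs) xs y
| ev_prec0 f g xs y : eval O f xs y -> eval O (CPrec f g) (0 :: xs) y
| ev_precS f g n xs r y :
    eval O (CPrec f g) (n :: xs) r -> eval O g (n :: r :: xs) y ->
    eval O (CPrec f g) (n.+1 :: xs) y
| ev_mu f xs n :
    eval O f (n :: xs) 0 ->
    (forall j, j < n -> exists v, v <> 0 /\ eval O f (j :: xs) v) ->
    eval O (CMu f) xs n
with evals (O : nat -> bool) : list code -> seq nat -> seq nat -> Prop :=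
| evs_nil xs : evals O nil xs [::]
| evs_cons g gs xs y ys :
    eval O g xs y -> evals O gs xs ys -> evals O (g :: gs) xs (y :: ys).

Definition turing_le (A C : nat -> bool) : Prop :=
  exists c : code, forall n, eval C c [:: n] (if A n then 1 else 0).

(* Bijective coding of binary strings by natural numbers. *)
Fixpoint str_code (s : seq bool) : nat :=
  match s with
  | [::] => 0
  | b :: s' => (str_code s').*2 + (b : nat).+1
  end.

Definition restr (X : nat -> bool) (n : nat) : seq bool := mkseq X n.

Definition str_computable (C : nat -> bool) (R : seq bool -> bool) : Prop :=
  exists c : code, forall s, eval C c [:: str_code s] (if R s then 1 else 0).

Definition Pi01 (C : nat -> bool) (P : (nat -> bool) -> Prop) : Prop :=
  exists R : seq bool -> bool, str_computable C R /\
    forall X, P X <-> (forall n, R (restr X n)).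

Definition replace (X : nat -> bool) (s : seq bool) : nat -> bool :=
  fun n => if n < size s then nth false s n else X n.

Definition subset (X Y : nat -> bool) : Prop := forall n, X n -> Y n.

Definition mathias_ext (tau : seq bool) (Y : nat -> bool)
  (sigma : seq bool) (X : nat -> bool) : Prop :=
  prefix sigma tau /\ subset (replace Y tau) (replace X sigma).

Definition mathias_sat (G : nat -> bool) (sigma : seq bool) (X : nat -> bool) : Prop :=
  prefix sigma (restr G (size sigma)) /\ subset G (replace X sigma).

(* X = X_0 (+) ... (+) X_{k-1}, with X_i = {n | k*n + i \in X} *)
Definition part (k : nat) (X : nat -> bool) (i : nat) : nat -> bool :=
  fun n => X (k * n + i).

Definition codes_partition (k : nat) (X : nat -> bool) : Prop :=
  forall n, exists2 i, i < k & part k X i n.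

(* (k, sigma_0, ..., sigma_{k-1}, P); only sigma i for i < k is relevant *)
Record cond := Cond {
  ck : nat;
  csig : nat -> seq bool;
  cP : (nat -> bool) -> Prop }.

Definition is_cond (C : nat -> bool) (c : cond) : Prop :=
  0 < ck c /\ Pi01 C (cP c) /\ (exists X, cP c X) /\
  (forall X, cP c X -> codes_partition (ck c) X).

Definition cond_ext (d c : cond) : Prop :=
  exists f : nat -> nat, (forall i, i < ck d -> f i < ck c) /\
    forall Y, cP d Y -> exists2 X, cP c X &
      forall i, i < ck d ->
        mathias_ext (csig d i) (part (ck d) Y i) (csig c (f i)) (part (ck c) X (f i)).

Definition sat_on_part (G : nat -> bool) (c : cond) (i : nat) : Prop :=
  exists2 X, cP c X & mathias_sat G (csig c i) (part (ck c) X i).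

Definition infinite_set (X : nat -> bool) : Prop := forall N, exists2 n, N <= n & X n.

Definition acceptable (A : nat -> bool) (c : cond) (i : nat) : Prop :=
  i < ck c /\ exists2 X, cP c X &
    infinite_set (fun n => part (ck c) X i n && A n) /\
    infinite_set (fun n => part (ck c) X i n && ~~ A n).

(* |sigma \cap A|, sigma viewed as a finite set *)
Definition card_in (s : seq bool) (A : nat -> bool) : nat :=
  count (fun n => nth false s n && A n) (iota 0 (size s)).

Definition forces_Q (A : nat -> bool) (m : nat) (c : cond) (i : nat) : Prop :=
  m <= card_in (csig c i) A /\ m <= card_in (csig c i) (fun n => ~~ A n).

(* Main.v *)
Require Import Defs.
From mathcomp Require Import all_boot zify.
From Stdlib Require Import Classical ClassicalEpsilon.
Set Implicit Arguments. Unset Strict Implicit. Unset Printing Implicit Defensive.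

Definition stepf c := (c.-1)./2.
Definition cjf c j := iter j stepf c.

Lemma code_cons b s : str_code (b :: s) = (str_code s).*2 + (b : nat).+1.
Proof. by []. Qed.

Lemma step_cons b s : stepf (str_code (b :: s)) = str_code s.
Proof. by rewrite /stepf code_cons addnS /= addnC half_bit_double. Qed.

Lemma code_eq0 s : (str_code s == 0) = (s == [::]).
Proof. by case: s => [|b s] //=; rewrite addnS. Qed.

Lemma code_inj : injective str_code.
Proof.
elim=> [|b s IH] [|b' s'] h //; try by move: h => /=; rewrite addnS.
have h2 := congr1 stepf h; rewrite !step_cons in h2.
have h1 := congr1 (fun x => odd x.-1) h; rewrite /= !addnS /= !oddD !odd_double /= in h1.
have e := IH _ h2; subst s'.
by move: h1 {h}; case: b; case: b'.
Qed.

Lemma code_surj n : exists s, str_code s = n.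
Proof.
elim/ltn_ind: n => [[|n]] IH; first by exists [::].
have hlt : n./2 < n.+1 by rewrite ltnS leq_half_double -addnn; lia.
have [s hs] := IH n./2 hlt.
exists (odd n :: s); rewrite code_cons hs addnS addnC.
by rewrite -[in RHS](odd_double_half n).
Qed.

Lemma code_surj' n : exists s, str_code s == n.
Proof. by have [s hs] := code_surj n; exists s; apply/eqP. Qed.
Definition dec n : seq bool := xchoose (code_surj' n).
Lemma decK n : str_code (dec n) = n.
Proof. exact/eqP/(xchooseP (code_surj' n)). Qed.
Lemma codeK s : dec (str_code s) = s.
Proof. by apply: code_inj; rewrite decK. Qed.

Lemma cjf_code t j : cjf (str_code t) j = str_code (drop j t).
Proof.
elim: j t => [|j IH] t; first by rewrite drop0.
rewrite /cjf iterSr -/(cjf _ j); case: t => [|b t] /=.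
  by rewrite /stepf /= -/(cjf 0 j) (IH [::]) /=.
by rewrite step_cons IH.
Qed.

Definition bitf c p := (cjf c p != 0) && odd (cjf c p).-1.
Lemma bitf_code t p : bitf (str_code t) p = nth false t p.
Proof.
rewrite /bitf cjf_code code_eq0.
case: (ltnP p (size t)) => h.
  rewrite (drop_nth false h) /= addnS /= oddD odd_double /=.
  by case: (nth false t p).
by rewrite drop_oversize // nth_default.
Qed.

Lemma code_split t j : str_code t = str_code (take j t) + 2 ^ j * str_code (drop j t).
Proof.
elim: t j => [|b t IH] [|j] /=; rewrite ?muln0 ?mul1n //.
by rewrite (IH j) expnS; lia.
Qed.

Definition takef c j := c - 2 ^ j * cjf c j.
Lemma takef_code t j : takef (str_code t) j = str_code (take j t).
Proof. by rewrite /takef cjf_code {1}(code_split t j) addnK. Qed.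

Lemma code_lt' t : (str_code t).+2 <= 2 ^ (size t).+1.
Proof.
elim: t => [|b t IH] //=. rewrite [2 ^ _]expnS -mul2n.
move: IH; set X := 2 ^ _; move=> IH.
have hb : (b : nat) <= 1 by case: b.
clearbody X; move: (nat_of_bool b) hb => bn hbn; lia. Qed.
Lemma code_lt t : str_code t < 2 ^ (size t).+1.
Proof. by have := code_lt' t; lia. Qed.

Lemma size_cjf t L : 0 < L ->
  ((cjf (str_code t) L == 0) && (cjf (str_code t) L.-1 != 0)) = (size t == L).
Proof.
move=> hL; rewrite !cjf_code !code_eq0 -!size_eq0 !size_drop.
case: L hL => // L _ /=; lia.
Qed.

Lemma iota_rc n : iota 0 n.+1 = rcons (iota 0 n) n.
Proof. by rewrite -cats1 -{1}(addn1 n) iotaD. Qed.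

Section Comp.
Variable O : nat -> bool.

Definition computes (c : code) (F : seq nat -> nat) := forall xs, eval O c xs (F xs).

Lemma computes_ext c F G : (forall xs, F xs = G xs) -> computes c F -> computes c G.
Proof. by move=> e h xs; rewrite -e. Qed.

Lemma zero_ok : computes CZero (fun _ => 0).
Proof. move=> xs; exact: ev_zero. Qed.
Lemma proj_ok i : computes (CProj i) (fun xs => nth 0 xs i).
Proof. move=> xs; exact: ev_proj. Qed.
Lemma succ_ok : computes CSucc (fun xs => (head 0 xs).+1).
Proof. move=> xs; exact: ev_succ. Qed.

Lemma app1_ok f g F G : computes f F -> computes g G ->
  computes (CComp f [:: g]) (fun xs => F [:: G xs]).
Proof.
move=> hf hg xs; apply: ev_comp (hf _); apply: evs_cons (hg _) (evs_nil _ _).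
Qed.
Lemma app2_ok f g h F G H : computes f F -> computes g G -> computes h H ->
  computes (CComp f [:: g; h]) (fun xs => F [:: G xs; H xs]).
Proof.
move=> hf hg hh xs; apply: ev_comp (hf _).
apply: evs_cons (hg _) (evs_cons (hh _) (evs_nil _ _)).
Qed.
Lemma app3_ok f g h l F G H L : computes f F -> computes g G -> computes h H ->
  computes l L ->
  computes (CComp f [:: g; h; l]) (fun xs => F [:: G xs; H xs; L xs]).
Proof.
move=> hf hg hh hl xs; apply: ev_comp (hf _).
apply: evs_cons (hg _) (evs_cons (hh _) (evs_cons (hl _) (evs_nil _ _))).
Qed.

Lemma evals_proj l xs : evals O (map CProj l) xs (map (nth 0 xs) l).
Proof. elim: l => [|i l IH] /=; [exact: evs_nil | exact: evs_cons (ev_proj _ _ _) IH]. Qed.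

Lemma appP_ok f F l : computes f F ->
  computes (CComp f (map CProj l)) (fun xs => F (map (nth 0 xs) l)).
Proof. move=> hf xs; exact: ev_comp (evals_proj _ _) (hf _). Qed.

Fixpoint precf (F G : seq nat -> nat) (n : nat) (ys : seq nat) : nat :=
  match n with 0 => F ys | n'.+1 => G (n' :: precf F G n' ys :: ys) end.

Lemma prec_ok f g F G : computes f F -> computes g G ->
  forall n ys, eval O (CPrec f g) (n :: ys) (precf F G n ys).
Proof.
move=> hf hg; elim=> [|n IH] ys /=; first exact: ev_prec0.
exact: ev_precS (IH ys) (hg _).
Qed.

Definition precA a f g := CComp (CPrec f g) (map CProj (iota 0 a.+1)).

Lemma precA_ok a f g F G : computes f F -> computes g G ->
  computes (precA a f g)
    (fun xs => precf F G (nth 0 xs 0) (map (nth 0 xs) (iota 1 a))).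
Proof.
move=> hf hg xs; apply: ev_comp (evals_proj _ _) _ => /=.
exact: prec_ok.
Qed.

Lemma mu_ok f F xs n : computes f F -> F (n :: xs) = 0 ->
  (forall j, j < n -> F (j :: xs) <> 0) -> eval O (CMu f) xs n.
Proof.
move=> hf h0 hj; apply: ev_mu; first by rewrite -h0.
move=> j /hj hne; exists (F (j :: xs)); split=> //.
Qed.

Fixpoint cconst n := match n with 0 => CZero | n'.+1 => CComp CSucc [:: cconst n'] end.
Lemma const_ok n : computes (cconst n) (fun _ => n).
Proof.
elim: n => [|n IH]; first exact: zero_ok.
exact: computes_ext (app1_ok succ_ok IH).
Qed.

Notation x0 xs := (nth 0 xs 0).
Notation x1 xs := (nth 0 xs 1).
Notation x2 xs := (nth 0 xs 2).

Definition cadd := precA 1 (CProj 0) (CComp CSucc [:: CProj 1]).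
Lemma add_ok : computes cadd (fun xs => x0 xs + x1 xs).
Proof.
apply: computes_ext (precA_ok 1 (proj_ok 0) (app1_ok succ_ok (proj_ok 1))) => xs /=.
by elim: (x0 xs) => [|n IH] //=; rewrite IH.
Qed.

Definition cmul := precA 1 CZero (CComp cadd [:: CProj 1; CProj 2]).
Lemma mul_ok : computes cmul (fun xs => x0 xs * x1 xs).
Proof.
apply: computes_ext (precA_ok 1 zero_ok (app2_ok add_ok (proj_ok 1) (proj_ok 2))) => xs /=.
by elim: (x0 xs) => [|n IH] //=; rewrite IH mulSn addnC.
Qed.

Definition cpred := precA 0 CZero (CProj 0).
Lemma pred_ok : computes cpred (fun xs => (x0 xs).-1).
Proof.
apply: computes_ext (precA_ok 0 zero_ok (proj_ok 0)) => xs /=.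
by case: (x0 xs).
Qed.

Definition csubr := precA 1 (CProj 0) (CComp cpred [:: CProj 1]).
Definition csub := CComp csubr [:: CProj 1; CProj 0].
Lemma sub_ok : computes csub (fun xs => x0 xs - x1 xs).
Proof.
have h := precA_ok 1 (proj_ok 0) (app1_ok pred_ok (proj_ok 1)).
apply: computes_ext (app2_ok h (proj_ok 1) (proj_ok 0)) => xs /=.
by elim: (x1 xs) => [|n IH] //=; rewrite ?subn0 // IH subnS.
Qed.

Definition ciszero := precA 0 (cconst 1) CZero.
Lemma iszero_ok : computes ciszero (fun xs => nat_of_bool (x0 xs == 0)).
Proof.
apply: computes_ext (precA_ok 0 (const_ok 1) zero_ok) => xs /=.
by case: (x0 xs).
Qed.

Definition codd := precA 0 CZero (CComp ciszero [:: CProj 1]).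
Lemma odd_ok : computes codd (fun xs => nat_of_bool (odd (x0 xs))).
Proof.
apply: computes_ext (precA_ok 0 zero_ok (app1_ok iszero_ok (proj_ok 1))) => xs /=.
by elim: (x0 xs) => [|n IH] //=; rewrite IH; case: (odd n).
Qed.

Definition cdiv2 := precA 0 CZero (CComp cadd [:: CProj 1; CComp codd [:: CProj 0]]).
Lemma div2_ok : computes cdiv2 (fun xs => (x0 xs)./2).
Proof.
apply: computes_ext (precA_ok 0 zero_ok (app2_ok add_ok (proj_ok 1) (app1_ok odd_ok (proj_ok 0)))) => xs /=.
elim: (x0 xs) => [|n IH] //=; rewrite IH.
by rewrite /= uphalf_half addnC.
Qed.

Definition cpow2 := precA 0 (cconst 1) (CComp cadd [:: CProj 1; CProj 1]).
Lemma pow2_ok : computes cpow2 (fun xs => 2 ^ (x0 xs)).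
Proof.
apply: computes_ext (precA_ok 0 (const_ok 1) (app2_ok add_ok (proj_ok 1) (proj_ok 1))) => xs /=.
by elim: (x0 xs) => [|n IH] //=; rewrite IH expnS mul2n addnn.
Qed.

Definition cstep := CComp cdiv2 [:: CComp cpred [:: CProj 0]].
Lemma step_ok : computes cstep (fun xs => stepf (x0 xs)).
Proof. exact: computes_ext (app1_ok div2_ok (app1_ok pred_ok (proj_ok 0))). Qed.

(* args (j, c) *)
Definition ccj := precA 1 (CProj 0) (CComp cstep [:: CProj 1]).
Lemma cj_ok : computes ccj (fun xs => cjf (x1 xs) (x0 xs)).
Proof.
apply: computes_ext (precA_ok 1 (proj_ok 0) (app1_ok step_ok (proj_ok 1))) => xs /=.
by rewrite /cjf; elim: (x0 xs) => [|n IH] //=; rewrite IH.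
Qed.

Definition cnot := ciszero.
Definition cand := cmul.
Definition cor := CComp cnot [:: CComp cand [:: CComp cnot [:: CProj 0]; CComp cnot [:: CProj 1]]].

Lemma or_ok : computes cor (fun xs => nat_of_bool ((x0 xs != 0) || (x1 xs != 0))).
Proof.
apply: computes_ext (app1_ok iszero_ok (app2_ok mul_ok (app1_ok iszero_ok (proj_ok 0)) (app1_ok iszero_ok (proj_ok 1)))) => xs /=.
by case: (x0 xs) => [|a]; case: (x1 xs).
Qed.

Definition bfa a p := precA a (cconst 1)
  (CComp cmul [:: CProj 1; CComp p (map CProj (0 :: iota 2 a))]).

Lemma bfa_ok a p (Pb : seq nat -> bool) :
  computes p (fun xs => nat_of_bool (Pb xs)) ->
  computes (bfa a p) (fun xs => nat_of_bool
     (all (fun i => Pb (i :: map (nth 0 xs) (iota 1 a))) (iota 0 (x0 xs)))).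
Proof.
move=> hp.
apply: computes_ext (precA_ok a (const_ok 1) (app2_ok mul_ok (proj_ok 1) (appP_ok _ hp))) => xs /=.
set ys := map _ (iota 1 a).
have hys : size ys = a by rewrite /ys size_map size_iota.
elim: (x0 xs) => [|n IH] //=.
rewrite IH.
change (Pb (0 :: ys) && all (fun i => Pb (i :: ys)) (iota 1 n)) with (all (fun i => Pb (i :: ys)) (iota 0 n.+1)).
rewrite iota_rc all_rcons mulnb andbC.
do 3 f_equal.
rewrite map_nth_iota /=; last by rewrite hys /= subn2.
by rewrite drop0 -hys take_size.
Qed.

Definition ceq := CComp ciszero [:: CComp cadd [:: csub; CComp csub [:: CProj 1; CProj 0]]].
Lemma eq_ok : computes ceq (fun xs => nat_of_bool (x0 xs == x1 xs)).
Proof.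
apply: computes_ext (app1_ok iszero_ok (app2_ok add_ok sub_ok (app2_ok sub_ok (proj_ok 1) (proj_ok 0)))) => xs /=.
by rewrite addn_eq0 !subn_eq0 eqn_leq.
Qed.

Definition clt := CComp cnot [:: CComp ciszero [:: CComp csub [:: CProj 1; CProj 0]]].
Lemma lt_ok : computes clt (fun xs => nat_of_bool (x0 xs < x1 xs)).
Proof.
apply: computes_ext (app1_ok iszero_ok (app1_ok iszero_ok (app2_ok sub_ok (proj_ok 1) (proj_ok 0)))) => xs /=.
by rewrite subn_eq0; case: (leqP (x1 xs) (x0 xs)).
Qed.

Lemma and_ok f g F G : computes f (fun xs => nat_of_bool (F xs)) ->
  computes g (fun xs => nat_of_bool (G xs)) ->
  computes (CComp cand [:: f; g]) (fun xs => nat_of_bool (F xs && G xs)).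
Proof. move=> hf hg; apply: computes_ext (app2_ok mul_ok hf hg) => xs /=; exact: mulnb. Qed.

Lemma orb_ok f g F G : computes f (fun xs => nat_of_bool (F xs)) ->
  computes g (fun xs => nat_of_bool (G xs)) ->
  computes (CComp cor [:: f; g]) (fun xs => nat_of_bool (F xs || G xs)).
Proof. move=> hf hg; apply: computes_ext (app2_ok or_ok hf hg) => xs /=; by case: (F xs); case: (G xs). Qed.

Lemma not_ok f F : computes f (fun xs => nat_of_bool (F xs)) ->
  computes (CComp cnot [:: f]) (fun xs => nat_of_bool (~~ F xs)).
Proof. move=> hf; apply: computes_ext (app1_ok iszero_ok hf) => xs /=; by case: (F xs). Qed.

End Comp.

Definition bitokf c j (b : bool) := (cjf c j == 0) || (odd (cjf c j).-1 == b).
Lemma bitok_code s j b : bitokf (str_code s) j b = (size s <= j) || (nth false s j == b).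
Proof.
rewrite /bitokf cjf_code code_eq0 -size_eq0 size_drop subn_eq0.
case: (leqP (size s) j) => //= h.
have := bitf_code s j; rewrite /bitf cjf_code code_eq0 -size_eq0 size_drop subn_eq0 leqNgt h /=.
by move=> ->.
Qed.

Lemma natb_eq (a b : bool) : (nat_of_bool a == nat_of_bool b) = (a == b).
Proof. by case: a; case: b. Qed.

Section Comp2.
Variable O : nat -> bool.

Definition cjc j := CComp ccj [:: cconst j; CProj 0].
Lemma cjc_ok j : computes O (cjc j) (fun xs => cjf (nth 0 xs 0) j).
Proof. exact: computes_ext (app2_ok (cj_ok O) (const_ok O j) (proj_ok O 0)). Qed.

Definition cbitok j (b : bool) :=
  CComp cor [:: CComp ciszero [:: cjc j];
                CComp ceq [:: CComp codd [:: CComp cpred [:: cjc j]]; cconst b]].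
Lemma bitok_ok j b : computes O (cbitok j b) (fun xs => nat_of_bool (bitokf (nth 0 xs 0) j b)).
Proof.
apply: computes_ext (orb_ok (app1_ok (iszero_ok O) (cjc_ok j))
   (app2_ok (eq_ok O) (app1_ok (odd_ok O) (app1_ok (pred_ok O) (cjc_ok j))) (const_ok O b))) => xs /=.
by rewrite natb_eq.
Qed.

Fixpoint chkc (cs : seq (nat * bool)) : code :=
  match cs with
  | [::] => cconst 1
  | p :: cs' => CComp cand [:: cbitok p.1 p.2; chkc cs']
  end.
Lemma chkc_ok cs : computes O (chkc cs)
  (fun xs => nat_of_bool (all (fun p => bitokf (nth 0 xs 0) p.1 p.2) cs)).
Proof.
elim: cs => [|p cs IH] /=; first exact: (const_ok O 1).
exact: and_ok (bitok_ok _ _) IH.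
Qed.

End Comp2.

Definition chk (cs : seq (nat * bool)) (s : seq bool) :=
  all (fun p => (size s <= p.1) || (nth false s p.1 == p.2)) cs.

Lemma chkf_code cs s : all (fun p => bitokf (str_code s) p.1 p.2) cs = chk cs s.
Proof. by apply: eq_all => p; rewrite bitok_code. Qed.

Lemma Rw_ok C R Rc : (forall s, eval C Rc [:: str_code s] (if R s then 1 else 0)) ->
  computes C (CComp Rc [:: CProj 0]) (fun xs => nat_of_bool (R (dec (nth 0 xs 0)))).
Proof.
move=> hR xs; apply: ev_comp (evs_cons (ev_proj _ _ _) (evs_nil _ _)) _.
have := hR (dec (nth 0 xs 0)); rewrite decK.
by case: (R _).
Qed.

Lemma restr_nth X n j : j < n -> nth false (restr X n) j = X j.
Proof. by move=> h; rewrite /restr nth_mkseq. Qed.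
Lemma size_restr X n : size (restr X n) = n.
Proof. by rewrite /restr size_mkseq. Qed.

Lemma pi01_cyl C P cs : Pi01 C P ->
  Pi01 C (fun Y => P Y /\ all (fun p => Y p.1 == p.2) cs).
Proof.
move=> [R [[Rc hRc] hP]].
exists (fun s => R s && chk cs s); split.
  exists (CComp cand [:: CComp Rc [:: CProj 0]; chkc cs]) => s.
  have := and_ok (Rw_ok hRc) (chkc_ok C cs) [:: str_code s].
  by rewrite /= chkf_code codeK; case: (_ && _).
move=> X; split.
  move=> [/hP hX hc] n; rewrite hX /=.
  apply/allP => p hp; move/allP: hc => /(_ p hp) /eqP <-.
  by case: (leqP n p.1) => h; rewrite ?size_restr ?h //= restr_nth ?eqxx ?orbT.
move=> h; split.
  by apply/hP => n; have /andP[] := h n.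
apply/allP => p hp; have /andP[_ /allP /(_ p hp)] := h p.1.+1.
by rewrite size_restr ltnn /= restr_nth.
Qed.

Section Search.
Variables (C A : nat -> bool) (R : seq bool -> bool) (Rc : code).
Hypothesis hRc : forall s, eval C Rc [:: str_code s] (if R s then 1 else 0).
Variables (k M : nat) (T : seq nat) (sigcs : seq (nat * bool)).

Notation x0 xs := (nth 0 xs 0).
Notation x1 xs := (nth 0 xs 1).
Notation x2 xs := (nth 0 xs 2).

Definition Rw := CComp Rc [:: CProj 0].
Lemma Rw_ok' : computes C Rw (fun xs => nat_of_bool (R (dec (x0 xs)))).
Proof. exact: Rw_ok. Qed.

(* (j, c) *)
Definition ctake := CComp csub [:: CProj 1; CComp cmul [:: CComp cpow2 [:: CProj 0]; ccj]].
Lemma take_ok : computes C ctake (fun xs => takef (x1 xs) (x0 xs)).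
Proof.
exact: computes_ext (app2_ok (sub_ok C) (proj_ok C 1)
  (app2_ok (mul_ok C) (app1_ok (pow2_ok C) (proj_ok C 0)) (cj_ok C))).
Qed.

Definition survf c lev := all (fun j => R (dec (takef c j))) (iota 0 lev.+1) &&
   all (fun p => bitokf c p.1 p.2) sigcs.

(* (c, lev) *)
Definition csurv := CComp cand [::
   CComp (bfa 1 (CComp Rw [:: ctake])) [:: CComp CSucc [:: CProj 1]; CProj 0];
   chkc sigcs].
Lemma surv_ok : computes C csurv (fun xs => nat_of_bool (survf (x0 xs) (x1 xs))).
Proof.
have h1 := bfa_ok 1 (app1_ok Rw_ok' take_ok).
exact: computes_ext (and_ok (app2_ok h1 (app1_ok (succ_ok C) (proj_ok C 1)) (proj_ok C 0)) (chkc_ok C sigcs)).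
Qed.

Definition sizef c lev := (cjf c lev == 0) && (cjf c lev.-1 != 0).
Definition csize := CComp cand [:: CComp ciszero [:: CComp ccj [:: CProj 1; CProj 0]];
   CComp cnot [:: CComp ciszero [:: CComp ccj [:: CComp cpred [:: CProj 1]; CProj 0]]]].
Lemma size_ok : computes C csize (fun xs => nat_of_bool (sizef (x0 xs) (x1 xs))).
Proof.
apply: computes_ext (and_ok (app1_ok (iszero_ok C) (app2_ok (cj_ok C) (proj_ok C 1) (proj_ok C 0)))
   (not_ok (app1_ok (iszero_ok C) (app2_ok (cj_ok C) (app1_ok (pred_ok C) (proj_ok C 1)) (proj_ok C 0))))) => xs /=.
by [].
Qed.

(* (c, p) *)
Definition cbit := CComp cand [:: CComp cnot [:: CComp ciszero [:: CComp ccj [:: CProj 1; CProj 0]]];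
   CComp codd [:: CComp cpred [:: CComp ccj [:: CProj 1; CProj 0]]]].
Lemma bit_ok : computes C cbit (fun xs => nat_of_bool (bitf (x0 xs) (x1 xs))).
Proof.
exact: computes_ext (and_ok (not_ok (app1_ok (iszero_ok C) (app2_ok (cj_ok C) (proj_ok C 1) (proj_ok C 0))))
   (app1_ok (odd_ok C) (app1_ok (pred_ok C) (app2_ok (cj_ok C) (proj_ok C 1) (proj_ok C 0))))).
Qed.

Definition hasf c n := has (fun i => (i < k) && bitf c (k * n + i)) T.

Fixpoint chas (l : seq nat) : code :=
  match l with
  | [::] => cconst 0
  | i :: l' => CComp cor [:: (if i < k then CComp cbit [:: CProj 0;
        CComp cadd [:: CComp cmul [:: cconst k; CProj 1]; cconst i]] else cconst 0); chas l']
  end.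
Lemma has_ok l : computes C (chas l)
   (fun xs => nat_of_bool (has (fun i => (i < k) && bitf (x0 xs) (k * x1 xs + i)) l)).
Proof.
elim: l => [|i l IH] /=; first exact: (const_ok C 0).
apply: orb_ok IH; case: (i < k) => /=.
  exact: computes_ext (app2_ok bit_ok (proj_ok C 0) (app2_ok (add_ok C) (app2_ok (mul_ok C) (const_ok C k) (proj_ok C 1)) (const_ok C i))).
exact: (const_ok C 0).
Qed.

Definition badf (b : bool) c n lev := sizef c lev && survf c lev && (hasf c n != b).
(* (c, n, lev) *)
Definition cbad (b : bool) := CComp cand [:: CComp cand [:: CComp csize [:: CProj 0; CProj 2];
     CComp csurv [:: CProj 0; CProj 2]];
   CComp cnot [:: CComp ceq [:: chas T; cconst b]]].
Lemma bad_ok b : computes C (cbad b) (fun xs => nat_of_bool (badf b (x0 xs) (x1 xs) (x2 xs))).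
Proof.
apply: computes_ext (and_ok (and_ok (app2_ok size_ok (proj_ok C 0) (proj_ok C 2))
   (app2_ok surv_ok (proj_ok C 0) (proj_ok C 2)))
   (not_ok (app2_ok (eq_ok C) (has_ok T) (const_ok C b)))) => xs /=.
by rewrite natb_eq.
Qed.

Definition allUf b n lev := all (fun c => ~~ badf b c n lev) (iota 0 (2 ^ lev.+1)).
(* (n, lev) *)
Definition callU b := CComp (bfa 2 (CComp cnot [:: cbad b]))
   [:: CComp cpow2 [:: CComp CSucc [:: CProj 1]]; CProj 0; CProj 1].
Lemma allU_ok b : computes C (callU b) (fun xs => nat_of_bool (allUf b (x0 xs) (x1 xs))).
Proof.
exact: computes_ext (app3_ok (bfa_ok 2 (not_ok (bad_ok b)))
   (app1_ok (pow2_ok C) (app1_ok (succ_ok C) (proj_ok C 1))) (proj_ok C 0) (proj_ok C 1)).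
Qed.

Definition levf L n := L + (k * n + k).
Definition muFb L n := ~~ ((n < M) || (allUf true n (levf L n) || allUf false n (levf L n))).
(* (L, n) *)
Definition clev := CComp cadd [:: CProj 0; CComp cadd [:: CComp cmul [:: cconst k; CProj 1]; cconst k]].
Lemma lev_ok : computes C clev (fun xs => levf (x0 xs) (x1 xs)).
Proof.
exact: computes_ext (app2_ok (add_ok C) (proj_ok C 0) (app2_ok (add_ok C)
   (app2_ok (mul_ok C) (const_ok C k) (proj_ok C 1)) (const_ok C k))).
Qed.
Definition cmuF := CComp cnot [:: CComp cor [:: CComp clt [:: CProj 1; cconst M];
  CComp cor [:: CComp (callU true) [:: CProj 1; clev]; CComp (callU false) [:: CProj 1; clev]]]].
Lemma muF_ok : computes C cmuF (fun xs => nat_of_bool (muFb (x0 xs) (x1 xs))).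
Proof.
exact: computes_ext (not_ok (orb_ok (app2_ok (lt_ok C) (proj_ok C 1) (const_ok C M))
   (orb_ok (app2_ok (allU_ok true) (proj_ok C 1) lev_ok) (app2_ok (allU_ok false) (proj_ok C 1) lev_ok)))).
Qed.

Definition tabf n := has (fun j => (n == j) && A j) (iota 0 M).
Fixpoint ctab (l : seq nat) : code :=
  match l with
  | [::] => cconst 0
  | j :: l' => CComp cor [:: CComp cand [:: CComp ceq [:: CProj 0; cconst j]; cconst (A j)]; ctab l']
  end.
Lemma tab_ok l : computes C (ctab l) (fun xs => nat_of_bool (has (fun j => (x0 xs == j) && A j) l)).
Proof.
elim: l => [|j l IH] /=; first exact: (const_ok C 0).
exact: orb_ok (and_ok (app2_ok (eq_ok C) (proj_ok C 0) (const_ok C j)) (const_ok C (A j))) IH.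
Qed.

Hypothesis hex : forall n, exists L, ~~ muFb L n.
Definition muv n := ex_minn (hex n).

Lemma mu_eval n : eval C (CMu cmuF) [:: n] (muv n).
Proof.
rewrite /muv; case: ex_minnP => L hL hmin.
apply: (mu_ok muF_ok) => /=; first by move: hL; case: (muFb L n).
move=> j hj; case e: (muFb j n) => //=.
by have := hmin j; rewrite e leqNgt hj => /(_ isT).
Qed.

Definition outf n := if n < M then tabf n else allUf true n (levf (muv n) n).

Definition cout := CComp cor [::
  CComp cand [:: CComp clt [:: CProj 0; cconst M]; ctab (iota 0 M)];
  CComp cand [:: CComp cnot [:: CComp clt [:: CProj 0; cconst M]];
     CComp (callU true) [:: CProj 0; CComp clev [:: CComp (CMu cmuF) [:: CProj 0]; CProj 0]]]].

Lemma out_ok n : eval C cout [:: n] (nat_of_bool (outf n)).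
Proof.
have hm : computes C (CComp (CMu cmuF) [:: CProj 0]) (fun xs => muv (x0 xs)).
  move=> xs; apply: ev_comp (evs_cons (ev_proj _ _ _) (evs_nil _ _)) _; exact: mu_eval.
have := orb_ok (and_ok (app2_ok (lt_ok C) (proj_ok C 0) (const_ok C M)) (tab_ok (iota 0 M)))
   (and_ok (not_ok (app2_ok (lt_ok C) (proj_ok C 0) (const_ok C M)))
    (app2_ok (allU_ok true) (proj_ok C 0) (app2_ok lev_ok hm (proj_ok C 0)))) [:: n].
rewrite /outf /=; case: (n < M) => /=; by rewrite ?orbF.
Qed.

End Search.

Definition pb (P : Prop) : bool := if excluded_middle_informative P then true else false.
Lemma pbP (P : Prop) : pb P <-> P.
Proof. by rewrite /pb; case: excluded_middle_informative. Qed.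

Lemma take_restr Y j L : j <= L -> take j (restr Y L) = restr Y j.
Proof.
move=> h; apply: (@eq_from_nth _ false).
  by rewrite size_takel ?size_restr.
move=> i; rewrite size_takel ?size_restr // => hi.
by rewrite nth_take // !restr_nth //; lia.
Qed.

Lemma restr_ext Y Z n : (forall j, j < n -> Y j = Z j) -> restr Y n = restr Z n.
Proof.
move=> h; apply: (@eq_from_nth _ false); rewrite !size_restr // => j hj.
by rewrite !restr_nth // h.
Qed.

Definition extends (s : seq bool) (Y : nat -> bool) := forall j, j < size s -> Y j = nth false s j.

Section Konig.
Variable B : seq bool -> Prop.
Hypothesis Bt : forall t j, B t -> B (take j t).
Hypothesis Blev : forall L, exists t, size t = L /\ B t.

Definition extb s := forall L, exists t, size t = size s + L /\ B t /\ take (size s) t = s.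

Lemma extb_step s : extb s -> extb (rcons s false) \/ extb (rcons s true).
Proof.
move=> hs; apply: NNPP => hn.
have [h0 h1] : ~ extb (rcons s false) /\ ~ extb (rcons s true) by tauto.
have [L0 hL0] := not_all_ex_not _ _ h0.
have [L1 hL1] := not_all_ex_not _ _ h1.
have [t [st [Bt' tt]]] := hs (L0 + L1 + 1).
set b := nth false t (size s).
have hlt : size s < size t by rewrite st; lia.
have ht1 : take (size s).+1 t = rcons s b by rewrite (take_nth false hlt) tt.
case hb: b.
  apply: hL1; exists (take (size s + 1 + L1) t); rewrite size_takel ?size_rcons; last by lia.
  split; first by lia.
  split; first exact: Bt.
  by rewrite take_takel -?hb -?ht1 ?addn1 //; lia.
apply: hL0; exists (take (size s + 1 + L0) t); rewrite size_takel ?size_rcons; last by lia.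
split; first by lia.
split; first exact: Bt.
by rewrite take_takel -?hb -?ht1 ?addn1 //; lia.
Qed.

Fixpoint pth n : seq bool :=
  match n with 0 => [::] | n'.+1 => rcons (pth n') (pb (extb (rcons (pth n') true))) end.

Lemma pth_ext n : extb (pth n).
Proof.
elim: n => [|n IH] /=.
  move=> L; have [t [st Bt']] := Blev L; exists t; split=> //; split=> //.
  by rewrite take0.
case: (extb_step IH) => h; case e: (pb _) => //.
  by move/pbP: e.
by move: e; rewrite /pb; case: excluded_middle_informative.
Qed.

Lemma size_pth n : size (pth n) = n.
Proof. by elim: n => //= n IH; rewrite size_rcons IH. Qed.

Lemma konig : exists Y, forall n, B (restr Y n).
Proof.
exists (fun j => nth false (pth j.+1) j) => n.
have -> : restr (fun j => nth false (pth j.+1) j) n = pth n.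
  elim: n => // n IH; rewrite /restr mkseqS -/(restr _ n) IH /=.
  by rewrite nth_rcons size_pth ltnn eqxx.
have [t [st [Bt' tt]]] := pth_ext n 0.
by move: tt; rewrite addn0 in st; rewrite -st take_size => <-.
Qed.
End Konig.

Section Baire.
Variables (P : (nat -> bool) -> Prop) (R : seq bool -> bool) (G : nat -> (nat -> bool) -> Prop).
Hypothesis hP : forall X, P X <-> forall n, R (restr X n).
Hypothesis hne : exists X, P X.
Hypothesis hcov : forall X, P X -> exists N, G N X.
Hypothesis hopen : forall N Y, ~ G N Y -> exists L, forall Z, (forall j, j < L -> Z j = Y j) -> ~ G N Z.

Definition nonemp s := exists Y, P Y /\ extends s Y.
Definition goodn N s t := size s < size t /\ (forall j, j < size s -> nth false t j = nth false s j) /\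
   nonemp t /\ forall Z, extends t Z -> ~ G N Z.

Lemma baire : exists s N, nonemp s /\ forall Y, P Y -> extends s Y -> G N Y.
Proof.
apply: NNPP => H.
have H' : forall s N, nonemp s -> exists Y, P Y /\ extends s Y /\ ~ G N Y.
  move=> s N hs; apply: NNPP => hn; apply: H; exists s, N; split=> // Y hY hsY.
  by apply: NNPP => hG; apply: hn; exists Y.
have hgood : forall N s, nonemp s -> exists t, goodn N s t.
  move=> N s hs; have [Y [hY [hsY hG]]] := H' s N hs.
  have [L hL] := hopen hG.
  exists (restr Y (size s + L + 1)); rewrite /goodn size_restr; split; first by lia.
  split; first by move=> j hj; rewrite restr_nth ?hsY //; lia.
  split; first by exists Y; split=> // j; rewrite size_restr => hj; rewrite restr_nth.
  move=> Z hZ; apply: hL => j hj; rewrite hZ ?restr_nth ?size_restr //; lia.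
pose nxt N s := epsilon (inhabits s) (goodn N s).
pose fix sq n := match n with 0 => [::] | n'.+1 => nxt n' (sq n') end.
have hsq : forall N, nonemp (sq N) /\ goodn N (sq N) (sq N.+1).
  elim=> [|N [IH _]].
    have hn0 : nonemp (sq 0) by have [X hX] := hne; exists X; split=> // j.
    split=> //; exact: (epsilon_spec (inhabits _) _ (hgood 0 _ hn0)).
  have [_ [_ [hn _]]] : goodn N (sq N) (sq N.+1).
    exact: (epsilon_spec (inhabits _) _ (hgood N _ IH)).
  split=> //; exact: (epsilon_spec (inhabits _) _ (hgood N.+1 _ hn)).
have hsize : forall N, N <= size (sq N).
  elim=> // N IH; have [_ [h _]] := hsq N; lia.
have hmono : forall N N', N <= N' -> size (sq N) <= size (sq N').
  move=> N; elim=> [|N' IH] hNN'.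
    by move: hNN'; rewrite leqn0 => /eqP ->.
  case: (ltnP N N'.+1) => [hlt | hge].
    have hle : N <= N' by lia.
    have [_ [hs _]] := hsq N'; have := IH hle; lia.
  by have -> : N = N'.+1 by lia.
have hchain : forall N N', N <= N' -> forall j, j < size (sq N) -> nth false (sq N') j = nth false (sq N) j.
  move=> N; elim=> [|N' IH] hNN' j hj.
    by move: hNN'; rewrite leqn0 => /eqP ->.
  case: (ltnP N N'.+1) => [hlt | hge].
    have [_ [hs [hn _]]] := hsq N'.
    rewrite hn; first exact: IH.
    have hle : N <= N' by lia.
    by have := hmono _ _ hle; lia.
  by have -> : N = N'.+1 by lia.
set Ys := fun j => nth false (sq j.+1) j.
have hext : forall N, extends (sq N) Ys.
  move=> N j hj; rewrite /Ys.
  case: (leqP N j.+1) => h.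
    exact: hchain.
  symmetry; apply: hchain; [lia | have := hsize j.+1; lia].
have hPY : P Ys.
  apply/hP => n; have [[Z [hZ hZe]] _] := hsq n.
  have -> : restr Ys n = restr Z n.
    apply: restr_ext => j hj.
    have hj' : j < size (sq n) by have := hsize n; lia.
    by rewrite hZe // (hext n j hj').
  by move/hP: hZ.
have [N hN] := hcov hPY.
have [_ [_ [_ hG]]] := (hsq N).2.
exact: hG (hext N.+1) hN.
Qed.
End Baire.

Definition refinec (d c : cond) :=
  ck d = ck c /\ (forall Y, cP d Y -> cP c Y) /\
  forall i, i < ck c -> prefix (csig c i) (csig d i) /\
    forall Y, cP d Y -> Defs.subset (replace (part (ck c) Y i) (csig d i))
                               (replace (part (ck c) Y i) (csig c i)).

Lemma refine_refl c : refinec c c.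
Proof. by split=> //; split=> // i _; split=> [|Y _ n]; rewrite ?prefix_refl. Qed.

Lemma prefix_trans' (s1 s2 s3 : seq bool) : prefix s1 s2 -> prefix s2 s3 -> prefix s1 s3.
Proof.
move=> /prefixP[u ->] /prefixP[v ->]; rewrite -catA; exact: prefix_prefix.
Qed.

Lemma refine_trans e d c : refinec e d -> refinec d c -> refinec e c.
Proof.
move=> [ked [hed hied]] [kdc [hdc hidc]]; split; first by rewrite ked.
split; first by move=> Y /hed /hdc.
move=> i hi; have [p1 s1] := hidc i hi; rewrite -kdc in hi.
have [p2 s2] := hied i hi; split; first exact: prefix_trans' p1 p2.
move=> Y hY n h; apply: (s1 Y (hed _ hY)); rewrite -kdc in h *; exact: (s2 Y hY n h).
Qed.

Lemma refine_ext d c : refinec d c -> cond_ext d c.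
Proof.
move=> [kdc [hdc hi]]; exists id; split; first by move=> i; rewrite kdc.
move=> Y hY; exists Y; first exact: hdc.
move=> i; rewrite kdc => /hi [p s]; split=> //; exact: s.
Qed.

Lemma acc_refine A d c i : refinec d c -> acceptable A d i -> acceptable A c i.
Proof.
move=> [kdc [hdc _]] [hi [X hX h]]; split; first by rewrite -kdc.
by exists X; [exact: hdc | rewrite -kdc].
Qed.

Lemma card_in_prefix s t B : prefix s t -> card_in s B <= card_in t B.
Proof.
move=> /prefixP[u ->]; rewrite /card_in size_cat iotaD count_cat add0n.
apply: leq_trans (leq_addr _ _); rewrite leq_eqVlt; apply/orP; left; apply/eqP.
by apply: eq_in_count => n; rewrite mem_iota /= add0n => hn; rewrite nth_cat hn.
Qed.

Lemma forces_refine A m d c i : refinec d c -> i < ck c -> forces_Q A m c i -> forces_Q A m d i.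
Proof.
move=> [_ [_ h]] /h [p _] [h1 h2]; split.
  exact: leq_trans h1 (card_in_prefix _ p).
exact: leq_trans h2 (card_in_prefix _ p).
Qed.

Lemma count_iota_mono S N L x : count S (iota N L) <= count S (iota N (L + x)).
Proof. by rewrite iotaD count_cat leq_addr. Qed.

Lemma inf_count S : infinite_set S -> forall m N, exists L, m <= count S (iota N L).
Proof.
move=> hS; elim=> [|m IH] N; first by exists 0.
have [L hL] := IH N; have [n hn hSn] := hS (N + L).
exists (L + (n - (N + L)) + 1).
rewrite iotaD count_cat (_ : N + (L + (n - (N + L))) = n); last by lia.
rewrite /= hSn addn1 ltnS; exact: leq_trans hL (count_iota_mono _ _ _ _).
Qed.

Lemma step_lemma C A m c i : is_cond C c -> acceptable A c i ->
  exists d, is_cond C d /\ refinec d c /\ forces_Q A m d i.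
Proof.
move=> [hk [hpi [_ hpart]]] [hi [X hX [inf1 inf2]]].
set k := ck c; set sg := csig c i; set s := size sg.
set Xi := part k X i.
have [L1 hL1] := inf_count inf1 m s.
have [L2 hL2] := inf_count inf2 m s.
set L := L1 + L2.
have hc1 : m <= count (fun n => Xi n && A n) (iota s L).
  exact: leq_trans hL1 (count_iota_mono _ _ _ _).
have hc2 : m <= count (fun n => Xi n && ~~ A n) (iota s L).
  apply: leq_trans hL2 _; rewrite /L addnC; exact: count_iota_mono.
set tau := sg ++ mkseq (fun j => Xi (s + j)) L.
set cs := mkseq (fun j => (k * (s + j) + i, X (k * (s + j) + i))) L.
pose d := Cond k (fun i' => if i' == i then tau else csig c i')
   (fun Y => cP c Y /\ all (fun p => Y p.1 == p.2) cs).
have hXcs : all (fun p => X p.1 == p.2) cs.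
  by apply/allP => p /mapP [j _ ->] /=.
have hcons : forall Y, cP d Y -> forall n, s <= n < s + L -> part k Y i n = Xi n.
  move=> Y [_ hY] n /andP [h1 h2].
  have /allP /(_ (k * (s + (n - s)) + i, X (k * (s + (n - s)) + i))) := hY.
  rewrite /= (_ : s + (n - s) = n); last by lia.
  move=> h; apply/eqP; apply: h.
  apply/mapP; exists (n - s); first by rewrite mem_iota; lia.
  by rewrite (_ : s + (n - s) = n) //; lia.
exists d; split.
  split=> //; split; first exact: pi01_cyl.
  split; first by exists X.
  by move=> Y [hY _]; exact: hpart.
split.
  split=> //; split; first by move=> Y [].
  move=> i' hi'; rewrite /=; case: eqP => [->|_]; last first.
    by split=> [|Y _ n]; rewrite ?prefix_refl.
  split; first exact: prefix_prefix.
  move=> Y hY n; rewrite /replace size_cat size_mkseq -/s.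
  case: (ltnP n s) => h1.
    by rewrite ltn_addr // nth_cat h1.
  case: (ltnP n (s + L)) => h2 //.
  rewrite nth_cat ltnNge h1 /= nth_mkseq; last by lia.
  rewrite (_ : s + (n - s) = n); last by lia.
  by rewrite (hcons Y hY n) ?h1.
have hcard : forall B, count (fun n => Xi n && B n) (iota s L) <= card_in tau B.
  move=> B; rewrite /card_in size_cat size_mkseq -/s iotaD count_cat add0n.
  apply: leq_trans (leq_addl _ _); rewrite leq_eqVlt; apply/orP; left; apply/eqP.
  apply: eq_in_count => n; rewrite mem_iota => /andP [h1 h2].
  rewrite nth_cat ltnNge h1 /= nth_mkseq; last by lia.
  by rewrite (_ : s + (n - s) = n) //; lia.
by rewrite /forces_Q /= eqxx; split; [exact: leq_trans hc1 (hcard A) | exact: leq_trans hc2 (hcard _)].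
Qed.

Lemma part2 C A m c : is_cond C c ->
  exists d, is_cond C d /\ cond_ext d c /\ forall i, acceptable A d i -> forces_Q A m d i.
Proof.
move=> hc.
suff : forall j, j <= ck c -> exists d, is_cond C d /\ refinec d c /\
   forall i, i < j -> acceptable A d i -> forces_Q A m d i.
  move=> /(_ (ck c) (leqnn _)) [d [hd [hr hf]]]; exists d; split=> //.
  split; first exact: refine_ext.
  move=> i ha; have [hi _] := ha; apply: (hf i _ ha); by case: hr => <-.
elim=> [|j IH] hj.
  by exists c; split=> //; split; [exact: refine_refl | move=> i].
have [d [hd [hr hf]]] := IH (ltnW hj).
have [ha | hna] := classic (acceptable A d j).
  have [e [he [hre hfe]]] := step_lemma m hd ha.
  exists e; split=> //; split; first exact: refine_trans hre hr.
  move=> i; rewrite ltnS leq_eqVlt => /orP [/eqP -> //| hi] hae.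
  apply: forces_refine hre _ (hf i hi (acc_refine hre hae)).
  case: hr => -> _; lia.
exists d; split=> //; split=> //.
move=> i; rewrite ltnS leq_eqVlt => /orP [/eqP -> //| hi]; exact: hf.
Qed.

Lemma fin_not_inf S : ~ infinite_set S -> exists N, forall n, N <= n -> ~~ S n.
Proof.
move=> h; have [N hN] := not_all_ex_not _ _ h; exists N => n hn.
by apply/negP => hs; apply: hN; exists n.
Qed.

Lemma bound_fin (Q : nat -> nat -> Prop) k :
  (forall i, i < k -> exists N, forall n, N <= n -> Q i n) ->
  exists M, forall i, i < k -> forall n, M <= n -> Q i n.
Proof.
elim: k => [|k IH] h; first by exists 0.
have [M hM] := IH (fun i hi => h i (ltnW hi)).
have [N hN] := h k (ltnSn k).
exists (M + N) => i; rewrite ltnS leq_eqVlt => /orP [/eqP -> | hi] n hn.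
  apply: hN; lia.
apply: hM => //; lia.
Qed.

Section Part1.
Variables (C A : nat -> bool) (c : cond).
Hypothesis hc : is_cond C c.
Hypothesis hnacc : forall i, ~ acceptable A c i.

Definition kk := ck c.
Definition inF (T : seq nat) (M : nat) (X : nat -> bool) :=
  forall n, M <= n -> A n = has (fun i => (i < kk) && X (kk * n + i)) T.

Lemma step1 X : cP c X -> exists T M, inF T M X.
Proof.
move=> hX.
pose inf1 i := infinite_set (fun n => part kk X i n && A n).
set T := [seq i <- iota 0 kk | pb (inf1 i)].
have h : forall i, i < kk -> exists N, forall n, N <= n ->
   (pb (inf1 i) -> part kk X i n -> A n) /\ (~~ pb (inf1 i) -> part kk X i n -> ~~ A n).
  move=> i hi; case e: (pb (inf1 i)).
    have hinf : inf1 i by apply/pbP; rewrite e.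
    have hn2 : ~ infinite_set (fun n => part kk X i n && ~~ A n).
      move=> h2; apply: (hnacc (i := i)); split=> //; exists X => //.
    have [N hN] := fin_not_inf hn2; exists N => n hn; split=> // _ hp.
    by have := hN n hn; rewrite hp /= negbK.
  have hn1 : ~ inf1 i by move=> h1; move: e; have := proj2 (pbP _) h1 => ->.
  have [N hN] := fin_not_inf hn1; exists N => n hn; split=> // _ hp.
  by have := hN n hn; rewrite hp.
have [M hM] := bound_fin h.
exists T, M => n hn.
have [_ [_ [_ hpart]]] := hc.
apply/idP/idP.
  move=> hA; have [i hi hpi] := hpart X hX n.
  apply/hasP; exists i; last by rewrite hi.
  rewrite mem_filter mem_iota hi andbT /=.
  case e: (pb (inf1 i)) => //.
  by have [_ h2] := hM i hi n hn; move: (h2 (negbT e) hpi); rewrite hA.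
move/hasP => [i]; rewrite mem_filter mem_iota => /andP [he /andP [_ hi']] /andP [hi hpi].
by have [h1 _] := hM i hi n hn; exact: h1.
Qed.

Variables (R : seq bool -> bool) (Rc : code).
Hypothesis hRc : forall s, eval C Rc [:: str_code s] (if R s then 1 else 0).
Hypothesis hR : forall X, cP c X <-> forall n, R (restr X n).

Section Inner.
Variables (sg : seq bool) (T : seq nat) (M : nat).
Hypothesis hsub : forall Y, cP c Y -> extends sg Y -> inF T M Y.
Hypothesis hnes : nonemp (cP c) sg.

Definition sigcs := [seq (j, nth false sg j) | j <- iota 0 (size sg)].
Definition survb t := all (fun j => R (take j t)) (iota 0 (size t).+1) && chk sigcs t.
Definition hasT t n := has (fun i => (i < kk) && nth false t (kk * n + i)) T.

Lemma survb_restr Y L : cP c Y -> extends sg Y -> survb (restr Y L).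
Proof.
move=> hY he; apply/andP; split.
  apply/allP => j; rewrite mem_iota size_restr => /andP [_ hj].
  rewrite take_restr; last by lia.
  by move/hR: hY.
apply/allP => p /mapP [j]; rewrite mem_iota => /andP [_ hj] -> /=.
rewrite size_restr; case: (leqP L j) => //= hjL.
by rewrite restr_nth // he.
Qed.

Lemma survb_all Y : (forall n, survb (restr Y n)) -> cP c Y /\ extends sg Y.
Proof.
move=> h; split.
  apply/hR => n; have /andP [/allP h1 _] := h n.
  have := h1 n; rewrite mem_iota size_restr ltnS leqnn /= => /(_ isT).
  by rewrite take_oversize ?size_restr.
move=> j hj; have /andP [_ /allP h2] := h (size sg).
have := h2 (j, nth false sg j); rewrite size_restr.
have -> : (j, nth false sg j) \in sigcs by apply/mapP; exists j => //; rewrite mem_iota.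
by move=> /(_ isT) /=; rewrite leqNgt hj /= restr_nth // => /eqP.
Qed.

Lemma survb_take t j : survb t -> survb (take j t).
Proof.
case: (leqP (size t) j) => hj; first by rewrite take_oversize.
move=> /andP [/allP h1 /allP h2]; apply/andP; split.
  apply/allP => i; rewrite mem_iota size_takel ?(ltnW hj) // => /andP [_ hi].
  rewrite take_takel; last by lia.
  by apply: h1; rewrite mem_iota; lia.
apply/allP => p hp; have := h2 p hp; rewrite size_takel ?(ltnW hj) //.
case: (leqP j p.1) => //= hp1.
by rewrite nth_take // leqNgt (ltn_trans hp1 hj).
Qed.

Lemma hasT_take t j n : kk * n + kk <= j -> hasT (take j t) n = hasT t n.
Proof.
move=> h; apply: eq_has => i /=; case: (ltnP i kk) => //= hi.
by rewrite nth_take //; lia.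
Qed.

Lemma hasT_restr Y L n : kk * n + kk <= L ->
  hasT (restr Y L) n = has (fun i => (i < kk) && Y (kk * n + i)) T.
Proof.
move=> h; apply: eq_has => i /=; case: (ltnP i kk) => //= hi.
by rewrite restr_nth //; lia.
Qed.

Lemma claim n : M <= n -> exists L, forall t, size t = L + (kk * n + kk) -> survb t -> hasT t n = A n.
Proof.
move=> hn; apply: NNPP => H.
set K := kk * n + kk.
have H' : forall L, exists t, size t = L + K /\ survb t /\ hasT t n <> A n.
  move=> L; apply: NNPP => h; apply: H; exists L => t ht hs.
  by apply: NNPP => hne; apply: h; exists t.
pose B t := survb t /\ (K <= size t -> hasT t n <> A n).
have Bt : forall t j, B t -> B (take j t).
  move=> t j [h1 h2]; split; first exact: survb_take.
  move=> hK; rewrite hasT_take; last by move: hK; rewrite size_take; case: ifP => // hj; lia.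
  apply: h2; move: hK; rewrite size_take; case: ifP => //; lia.
have Blev : forall L, exists t, size t = L /\ B t.
  move=> L; case: (leqP K L) => hL.
    have [t [st [hs hh]]] := H' (L - K); exists t; split; first by rewrite st; lia.
    by split.
  have [t [st [hs hh]]] := H' 0; exists (take L t).
  rewrite size_takel; last by rewrite st; lia.
  split=> //; apply: Bt; split=> //.
have [Y hY] := konig Bt Blev.
have [hPY heY] := survb_all (fun m => (hY m).1).
have hF := @hsub Y hPY heY n hn.
have [_ h2] := hY K; apply: h2; first by rewrite size_restr.
by rewrite hasT_restr.
Qed.

Lemma survf_code t : survf R sigcs (str_code t) (size t) = survb t.
Proof.
rewrite /survf /survb chkf_code; congr (_ && _).
by apply: eq_all => j; rewrite takef_code codeK.
Qed.

Lemma hasf_code t n : hasf kk T (str_code t) n = hasT t n.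
Proof. by apply: eq_has => i; rewrite bitf_code. Qed.

Lemma allUf_iff b n lev : 0 < lev ->
  allUf R kk T sigcs b n lev <-> forall t, size t = lev -> survb t -> hasT t n = b.
Proof.
move=> hlev; split.
  move=> /allP h t st hs; have := h (str_code t).
  rewrite mem_iota /= -st code_lt => /(_ isT).
  rewrite /badf /sizef size_cjf; last by rewrite st.
  rewrite eqxx /= survf_code hs /= hasf_code.
  by move/negbNE/eqP.
move=> h; apply/allP => x _; rewrite -(decK x) /badf /sizef size_cjf //.
case e: (size (dec x) == lev) => //=.
move/eqP: e => e; rewrite -e survf_code.
case hs: (survb (dec x)) => //=.
by rewrite hasf_code h // eqxx.
Qed.

Lemma kpos : 0 < kk.
Proof. by case: hc. Qed.

Lemma hex : forall n, exists L, ~~ muFb R kk M T sigcs L n.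
Proof.
move=> n; case: (ltnP n M) => hn.
  by exists 0; rewrite /muFb hn.
have [L hL] := claim hn; exists L.
rewrite /muFb negbK ltnNge hn /=.
have hlev : 0 < levf kk L n by rewrite /levf; have := kpos; lia.
case eA: (A n).
  by apply/orP; left; apply/(allUf_iff _ _ hlev) => t st hs; rewrite hL // st.
by apply/orP; right; apply/(allUf_iff _ _ hlev) => t st hs; rewrite hL // st.
Qed.

Lemma outf_A n : outf A hex n = A n.
Proof.
rewrite /outf; case: (ltnP n M) => hn.
  rewrite /tabf; apply/hasP/idP => [[j _ /andP [/eqP -> //]] | hA].
  by exists n; rewrite ?mem_iota ?eqxx.
rewrite /muv; case: ex_minnP => L hL _.
move: hL; rewrite /muFb negbK ltnNge hn /= => hL.
have hlev : 0 < levf kk L n by rewrite /levf; have := kpos; lia.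
have [Y [hY hYe]] := hnes.
have hF := @hsub Y hY hYe n hn.
have hK : kk * n + kk <= levf kk L n by rewrite /levf; lia.
have htY : hasT (restr Y (levf kk L n)) n = A n by rewrite hasT_restr // hF.
case e1: (allUf R kk T sigcs true n (levf kk L n)).
  move/(allUf_iff _ _ hlev): e1 => /(_ (restr Y (levf kk L n))).
  by rewrite size_restr survb_restr // htY => /(_ erefl isT).
rewrite e1 /= in hL.
move/(allUf_iff _ _ hlev): hL => /(_ (restr Y (levf kk L n))).
by rewrite size_restr survb_restr // htY => /(_ erefl isT).
Qed.

Lemma tl : turing_le A C.
Proof.
exists (cout A Rc kk M T sigcs) => n.
have := out_ok A hRc hex n; rewrite outf_A.
by case: (A n).
Qed.

End Inner.

Lemma part1_tl : turing_le A C.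
Proof.
have [_ [_ [hne _]]] := hc.
pose G N Y := match (unpickle N : option (seq nat * nat)) with
                | Some p => inF p.1 p.2 Y | None => False end.
have hcov : forall X, cP c X -> exists N, G N X.
  move=> X hX; have [T [M hTM]] := step1 hX.
  by exists (pickle (T, M)); rewrite /G pickleK.
have hopen : forall N Y, ~ G N Y -> exists L, forall Z, (forall j, j < L -> Z j = Y j) -> ~ G N Z.
  move=> N Y; rewrite /G; case: (unpickle N) => [[T M]|] /= hY; last by exists 0.
  have [n hn] : exists n, ~ (M <= n -> A n = has (fun i => (i < kk) && Y (kk * n + i)) T).
    by apply: not_all_ex_not.
  exists (kk * n + kk) => Z hZ hZF; apply: hn => hMn; rewrite (hZF n hMn).
  apply: eq_has => i /=; case: (ltnP i kk) => //= hi; rewrite hZ //; lia.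
have [sg [N [hnes hsub]]] := baire hR hne hcov hopen.
move: hsub; rewrite /G; case e: (unpickle N) => [[T M]|] /= hsub.
  exact: (tl hsub hnes).
by have [Y [hY hYe]] := hnes; case: (hsub Y hY hYe).
Qed.

End Part1.

Theorem lemma4p1 (C A : nat -> bool) :
  ~ turing_le A C ->
  (forall c : cond, is_cond C c -> exists i, acceptable A c i) /\
  (forall (c : cond) (m : nat), is_cond C c ->
     exists d : cond, is_cond C d /\ cond_ext d c /\
       forall i, acceptable A d i -> forces_Q A m d i).
Proof.
move=> hA; split; last by move=> c m hc; exact: part2.
move=> c hc; apply: NNPP => hn.
have hnacc : forall i, ~ acceptable A c i by move=> i hi; apply: hn; exists i.
have hc' := hc; case: hc' => [_ [[R [[Rc hRc] hR]] _]].
by apply: hA; exact: (part1_tl hc hnacc hRc hR).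
Qed.
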